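(* There is no monad morphism $i:\mathbb{L}\to\mathbb{OS}$ from the superextension monad to the monad $\mathbb{OS}$ whose components $iX:\lambda X\to OS(X)$ are embeddings.
   Context: All spaces are compact Hausdorff, all maps continuous. A monad on this category is a triple $(F,\eta,\mu)$ with $F$ an endofunctor and natural transformations $\eta:\mathrm{Id}\to F$, $\mu:F^2\to F$ satisfying $\mu X\circ\eta FX=\mu X\circ F\eta X=\mathrm{id}_{FX}$ and $\mu X\circ\mu FX=\mu X\circ F\mu X$. A monad morphism $(F,\eta,\mu)\to(F',\eta',\mu')$ is a natural transformation $i:F\to F'$ with $i\circ\eta=\eta'$ and $i X\circ \mu X=\mu' X\circ i F'X\circ F(iX)$. For a compactum $X$, $OS(X)$ is the subspace of $\prod_{\varphi\in C(X)}[\min\varphi,\max\varphi]$ consisting of functionals $\nu:C(X)\to\mathbb{R}$ that are normed ($\nu(1_X)=1$), weakly additive ($\nu(\varphi+c_X)=\nu(\varphi)+c$ for constants $c$), order-preserving, positively homogeneous and semiadditive ($\nu(\varphi+\psi)\le\nu(\varphi)+\nu(\psi)$); for $f:X\to Y$, $OS(f)(\nu)(\varphi)=\nu(\varphi\circ f)$. The monad $\mathbb{OS}=(OS,\eta,\mu)$ has $\eta X(x)(\varphi)=\varphi(x)$ and $\mu X(\nu)(\varphi)=\nu(\pi_\varphi)$ for $\nu\in OS(OS(X))$, where $\pi_\varphi:OS(X)\to\mathbb{R}$, $\pi_\varphi(\lambda)=\lambda(\varphi)$. $\mathbb{L}=(\lambda,\eta_\lambda,\mu_\lambda)$ is the standard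 superextension monad: $\lambda X$ is the space of maximal linked systems of closed subsets of $X$ (with its standard topology), $\eta_\lambda X(x)=\{A \text{ closed}: x\in A\}$, with the standard multiplication. *)

(* Defs.v *)
From Stdlib Require Import Reals List ClassicalEpsilon.
Open Scope R_scope.

(** A space: a carrier type, a predicate singling out the points, and a
    subbase; the topology is the one generated by the subbase on [pts]. *)
Record space : Type := Space {
  car : Type;
  pts : car -> Prop;
  subbase : (car -> Prop) -> Prop }.

Definition Open (X : space) (W : car X -> Prop) : Prop :=
  forall x, pts X x -> W x ->
    exists l : list (car X -> Prop),
      (forall S, In S l -> subbase X S /\ S x) /\
      (forall y, pts X y -> (forall S, In S l -> S y) -> W y).

Definition ClosedSub (X : space) (A : car X -> Prop) : Prop :=
  (forall x, A x -> pts X x) /\ Open X (fun x => ~ A x).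

Definition Continuous (X Y : space) (f : car X -> car Y) : Prop :=
  (forall x, pts X x -> pts Y (f x)) /\
  (forall W, Open Y W -> Open X (fun x => W (f x))).

Definition Hausdorff (X : space) : Prop :=
  forall x y, pts X x -> pts X y -> x <> y ->
    exists U V, Open X U /\ Open X V /\ U x /\ V y /\
      (forall z, pts X z -> ~ (U z /\ V z)).

Definition Compact (X : space) : Prop :=
  forall (I : Type) (U : I -> car X -> Prop),
    (forall i, Open X (U i)) ->
    (forall x, pts X x -> exists i, U i x) ->
    exists l : list I, forall x, pts X x -> exists i, In i l /\ U i x.

Definition compactum (X : space) : Prop := Hausdorff X /\ Compact X.

Definition embedding (X Y : space) (f : car X -> car Y) : Prop :=
  Continuous X Y f /\
  (forall x y, pts X x -> pts X y -> f x = f y -> x = y) /\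
  (forall W, Open X W -> exists V, Open Y V /\
      forall x, pts X x -> (W x <-> V (f x))).

Definition Rsp : space :=
  Space R (fun _ => True) (fun S => exists a b, forall y, S y <-> a < y < b).

(** C(X): continuous real functions (raw functions, only values on pts matter). *)
Definition contfun (X : space) (phi : car X -> R) : Prop := Continuous X Rsp phi.

(** OS(X): functionals on C(X), encoded as raw functionals that vanish on
    non-continuous arguments and depend only on values on the points. *)
Definition OSmem (X : space) (nu : (car X -> R) -> R) : Prop :=
  (forall phi, ~ contfun X phi -> nu phi = 0) /\
  (forall phi psi, (forall x, pts X x -> phi x = psi x) -> nu phi = nu psi) /\
  (forall phi, contfun X phi ->
     (forall c, (forall x, pts X x -> c <= phi x) -> c <= nu phi) /\
     (forall c, (forall x, pts X x -> phi x <= c) -> nu phi <= c)) /\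
  nu (fun _ => 1) = 1 /\
  (forall phi c, contfun X phi -> nu (fun x => phi x + c) = nu phi + c) /\
  (forall phi psi, contfun X phi -> contfun X psi ->
     (forall x, pts X x -> phi x <= psi x) -> nu phi <= nu psi) /\
  (forall phi t, contfun X phi -> 0 <= t ->
     nu (fun x => t * phi x) = t * nu phi) /\
  (forall phi psi, contfun X phi -> contfun X psi ->
     nu (fun x => phi x + psi x) <= nu phi + nu psi).

Definition OSsp (X : space) : space :=
  Space ((car X -> R) -> R) (OSmem X)
    (fun S => exists phi a b, contfun X phi /\
                forall nu, S nu <-> a < nu phi < b).

Definition linked (X : space) (xi : (car X -> Prop) -> Prop) : Prop :=
  (forall A, xi A -> ClosedSub X A) /\
  (forall A B, xi A -> xi B -> exists x, A x /\ B x).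

Definition maxlinked (X : space) (xi : (car X -> Prop) -> Prop) : Prop :=
  linked X xi /\ (exists A, xi A) /\
  (forall eta, linked X eta -> (forall A, xi A -> eta A) ->
     forall A, eta A -> xi A).

Definition lamsp (X : space) : space :=
  Space ((car X -> Prop) -> Prop) (maxlinked X)
    (fun S => exists U, Open X U /\
        forall xi, S xi <-> exists A, xi A /\ forall x, A x -> U x).

Definition lmap (X Y : space) (f : car X -> car Y)
    (xi : (car X -> Prop) -> Prop) : (car Y -> Prop) -> Prop :=
  fun B => ClosedSub Y B /\ xi (fun x => pts X x /\ B (f x)).

Definition etaL (X : space) (x : car X) : (car X -> Prop) -> Prop :=
  fun A => ClosedSub X A /\ A x.

Definition muL (X : space) (M : car (lamsp (lamsp X))) : car (lamsp X) :=
  fun A => ClosedSub X A /\ M (fun xi => maxlinked X xi /\ xi A).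

Definition osmap (X Y : space) (f : car X -> car Y)
    (nu : (car X -> R) -> R) : (car Y -> R) -> R :=
  fun phi => if excluded_middle_informative (contfun Y phi)
             then nu (fun x => phi (f x)) else 0.

Definition etaOS (X : space) (x : car X) : (car X -> R) -> R :=
  fun phi => if excluded_middle_informative (contfun X phi) then phi x else 0.

Definition muOS (X : space) (N : car (OSsp (OSsp X))) : car (OSsp X) :=
  fun phi => if excluded_middle_informative (contfun X phi)
             then N (fun nu => nu phi) else 0.

(** Monad morphism L -> OS on the category of compacta (components given on
    all spaces; only the components at compacta are constrained). *)
Definition monad_morphism_L_OS
    (i : forall X : space, car (lamsp X) -> car (OSsp X)) : Prop :=
  (forall X Y : space, compactum X -> compactum Y ->
     forall f, Continuous X Y f ->
     forall xi, pts (lamsp X) xi ->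
       i Y (lmap X Y f xi) = osmap X Y f (i X xi)) /\
  (forall X : space, compactum X ->
     forall x, pts X x -> i X (etaL X x) = etaOS X x) /\
  (forall X : space, compactum X ->
     forall M, pts (lamsp (lamsp X)) M ->
       i X (muL X M) =
       muOS X (i (OSsp X) (lmap (lamsp X) (OSsp X) (i X) M))).

(* Main.v *)
Require Import Defs.
From Stdlib Require Import Reals List ClassicalEpsilon Classical FunctionalExtensionality PropExtensionality Lra.
Open Scope R_scope.

Inductive T3 := A3 | B3 | C3.

Definition X3 : space := Space T3 (fun _ => True) (fun S => exists t, forall y, S y <-> y = t).

Lemma open_all : forall W, Open X3 W.
Proof.
  intros W x _ Wx. exists ((fun y : T3 => y = x) :: nil). split.
  - intros S [<-|[]]. split; [exists x; tauto | reflexivity].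
  - intros y _ H. specialize (H _ (or_introl eq_refl)). simpl in H. subst; auto.
Qed.

Lemma closed_all : forall A, ClosedSub X3 A.
Proof. intros A. split; [intros; exact I | apply open_all]. Qed.

Lemma cont_all : forall f : T3 -> T3, Continuous X3 X3 f.
Proof. intros f; split; [intros; exact I | intros; apply open_all]. Qed.

Lemma contfun_all : forall phi, contfun X3 phi.
Proof. intros phi; split; [intros; exact I | intros; apply open_all]. Qed.

Lemma X3_compactum : compactum X3.
Proof.
  split.
  - intros x y _ _ Hxy. exists (fun z => z = x), (fun z => z = y).
    repeat split; try apply open_all; auto.
    intros z _ [H1 H2]; subst; auto.
  - intros I U _ Hc.
    destruct (Hc A3 Logic.I) as [ia Ha]. destruct (Hc B3 Logic.I) as [ib Hb].
    destruct (Hc C3 Logic.I) as [ic Hc'].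
    exists (ia :: ib :: ic :: nil). intros x _; destruct x.
    + exists ia; simpl; auto.
    + exists ib; simpl; auto.
    + exists ic; simpl; auto.
Qed.

Definition xi3 : (T3 -> Prop) -> Prop :=
  fun A => (A A3 /\ A B3) \/ (A A3 /\ A C3) \/ (A B3 /\ A C3).

Lemma xi3_ml : maxlinked X3 xi3.
Proof.
  split; [split|split].
  - intros; apply closed_all.
  - intros A B HA HB; unfold xi3 in *.
    destruct HA as [[]|[[]|[]]]; destruct HB as [[]|[[]|[]]]; eauto.
  - exists (fun _ => True). left; auto.
  - intros eta [_ Hl] Hsub A HA.
    destruct (classic (A A3)) as [a|a]; destruct (classic (A B3)) as [b|b];
    destruct (classic (A C3)) as [c|c]; unfold xi3; try tauto; exfalso.
    + destruct (Hl A (fun y => y = B3 \/ y = C3) HA (Hsub _ (or_intror (or_intror (conj (or_introl eq_refl) (or_intror eq_refl))))))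
        as [x [Hx [ -> | -> ]]]; tauto.
    + destruct (Hl A (fun y => y = A3 \/ y = C3) HA (Hsub _ (or_intror (or_introl (conj (or_introl eq_refl) (or_intror eq_refl))))))
        as [x [Hx [ -> | -> ]]]; tauto.
    + destruct (Hl A (fun y => y = A3 \/ y = B3) HA (Hsub _ (or_introl (conj (or_introl eq_refl) (or_intror eq_refl)))))
        as [x [Hx [ -> | -> ]]]; tauto.
    + destruct (Hl A A HA HA) as [x [Hx _]]; destruct x; tauto.
Qed.

Lemma lmap_eta (f : T3 -> T3) (p : T3) :
  (forall B : T3 -> Prop, xi3 (fun x => True /\ B (f x)) <-> B p) ->
  lmap X3 X3 f xi3 = etaL X3 p.
Proof.
  intros H. apply functional_extensionality; intro B.
  apply propositional_extensionality. unfold lmap, etaL. simpl.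
  specialize (H B). change (ClosedSub X3 B /\ xi3 (fun x => True /\ B (f x)) <-> ClosedSub X3 B /\ B p). tauto.
Qed.

Definition fa (x : T3) := match x with A3 => A3 | B3 => A3 | C3 => C3 end.
Definition fg (x : T3) := match x with A3 => A3 | B3 => B3 | C3 => B3 end.
Definition fh (x : T3) := match x with A3 => A3 | B3 => B3 | C3 => A3 end.

Definition indA (x : T3) : R := match x with A3 => 1 | _ => 0 end.
Definition indB (x : T3) : R := match x with B3 => 1 | _ => 0 end.
Definition indAB (x : T3) : R := match x with C3 => 0 | _ => 1 end.

Theorem corollary1 :
  ~ exists i : forall X : space, car (lamsp X) -> car (OSsp X),
      monad_morphism_L_OS i /\
      (forall X : space, compactum X -> embedding (lamsp X) (OSsp X) (i X)).
Proof.
  intros [i [[Hnat [Hunit _]] Hemb]].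
  destruct (Hemb X3 X3_compactum) as [[Hpts _] _].
  pose proof (Hpts xi3 xi3_ml) as Hmem. simpl in Hmem.
  set (nu := i X3 xi3) in *.
  assert (key : forall f p, (forall B : T3 -> Prop, xi3 (fun x => True /\ B (f x)) <-> B p) ->
            forall phi, nu (fun x => phi (f x)) = phi p).
  { intros f p Hf phi.
    pose proof (Hnat X3 X3 X3_compactum X3_compactum f (cont_all f) xi3 xi3_ml) as E.
    rewrite (lmap_eta f p Hf) in E. rewrite (Hunit X3 X3_compactum p I) in E.
    pose proof (f_equal (fun g => g phi) E) as E2. simpl in E2.
    unfold etaOS, osmap in E2.
    destruct (excluded_middle_informative (contfun X3 phi)) as [_|n];
      [|exfalso; apply n, contfun_all].
    symmetry; exact E2. }
  assert (H1 : nu indAB = 1).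
  { pose proof (key fa A3 (fun B => ltac:(unfold xi3; simpl; tauto)) indAB) as K; simpl in K.
    rewrite <- K.
    destruct Hmem as [_ [Hd _]]. apply Hd. intros x _; destruct x; reflexivity. }
  assert (H2 : nu indA = 0).
  { pose proof (key fg B3 (fun B => ltac:(unfold xi3; simpl; tauto)) indA) as K; simpl in K.
    rewrite <- K.
    destruct Hmem as [_ [Hd _]]. apply Hd. intros x _; destruct x; reflexivity. }
  assert (H3 : nu indB = 0).
  { pose proof (key fh A3 (fun B => ltac:(unfold xi3; simpl; tauto)) indB) as K; simpl in K.
    rewrite <- K.
    destruct Hmem as [_ [Hd _]]. apply Hd. intros x _; destruct x; reflexivity. }
  destruct Hmem as [_ [Hd [_ [_ [_ [_ [_ Hsa]]]]]]].
  pose proof (Hsa indA indB (contfun_all _) (contfun_all _)) as S.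
  rewrite (Hd _ indAB) in S by (intros x _; destruct x; simpl; lra).
  lra.
Qed.
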